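(* Under the hypotheses and notation of the noisy quadratic model below (with $0<\eta h_j<1$ for all $j$, $\alpha\in(0,1]$, $\beta_i\ge0$, $\sum_{i=0}^{k-1}\beta_i=1$, $\beta_0<1$), the stationary variance of AvgLookahead $$\mathbb V^*_{\mathrm{AvgLA}}=\alpha^2\,\mathbf Y\,\big(\mathbf I-\mathbf A^2\big)^{-1}\,\eta^2\mathbf H^2\Sigma\,(\mathbf I-\mathbf M^2)^{-1}$$ satisfies, entrywise, $$\mathbb V^*_{\mathrm{AvgLA}}\ \le\ \mathbb V^*_{\mathrm{ERM}}:=\eta^2\mathbf H^2\Sigma\,(\mathbf I-\mathbf M^2)^{-1},$$ where $\mathbb V^*_{\mathrm{ERM}}$ is the stationary coordinatewise variance of plain SGD $\boldsymbol\theta_{t+1}=\mathbf M\boldsymbol\theta_t+\eta\mathbf H\mathbf c_t$.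
   Context: Noisy quadratic model: $\mathbf H=\mathrm{diag}(h_1,\dots,h_d)$, $\Sigma=\mathrm{diag}(\sigma_1^2,\dots,\sigma_d^2)$ with $\sigma_j^2\ge0$, stochastic loss $\mathcal L(\boldsymbol\theta;\mathbf c)=\tfrac12(\boldsymbol\theta-\mathbf c)^\top\mathbf H(\boldsymbol\theta-\mathbf c)$ with i.i.d. $\mathbf c\sim\mathcal N(\mathbf 0,\Sigma)$ drawn at each step; $\mathbf M=\mathbf I-\eta\mathbf H$. AvgLookahead: fast weights $\boldsymbol\theta_{t,0}=\boldsymbol\phi_t$, $\boldsymbol\theta_{t,i+1}=\mathbf M\boldsymbol\theta_{t,i}+\eta\mathbf H\mathbf c_{t,i}$, slow update $\boldsymbol\phi_{t+1}=(1-\alpha)\boldsymbol\phi_t+\alpha\sum_{i=0}^{k-1}\beta_i\boldsymbol\theta_{t,i}$. Here $\mathbf A=(1-\alpha)\mathbf I+\alpha\sum_{i=0}^{k-1}\beta_i\mathbf M^i$ and $\mathbf Y=\sum_{i=0}^{k-1}\beta_i^2(\mathbf I-\mathbf M^{2i})+2\sum_{i=0}^{k-1}\sum_{j=0}^{i-1}\beta_i\beta_j\mathbf M^{i-j}(\mathbf I-\mathbf M^{2j})$. All matrices are diagonal and all inequalities are entrywise. *)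

(* Defs.v *)
(* All matrices of the noisy quadratic model are diagonal,
   so each matrix is represented by its diagonal (a function 'I_d -> R) and
   matrix operations (products, inverses, powers) act coordinatewise. *)
From mathcomp Require Import all_boot all_order all_algebra.
Set Implicit Arguments. Unset Strict Implicit. Unset Printing Implicit Defensive.
Import Order.TTheory GRing.Theory Num.Theory.
Local Open Scope ring_scope.

Section NQM.
Variables (R : realFieldType) (d : nat).

Definition Mcoef (eta : R) (h : 'I_d -> R) (j : 'I_d) : R := 1 - eta * h j.

Definition Acoef (eta alpha : R) (k : nat) (beta : nat -> R) (h : 'I_d -> R)
    (j : 'I_d) : R :=
  (1 - alpha) + alpha * \sum_(i < k) beta i * Mcoef eta h j ^+ i.

Definition Ycoef (eta : R) (k : nat) (beta : nat -> R) (h : 'I_d -> R)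
    (j : 'I_d) : R :=
  let m := Mcoef eta h j in
  \sum_(i < k) beta i ^+ 2 * (1 - m ^+ (2 * i))
  + 2 * \sum_(i < k) \sum_(l < i) beta i * beta l * m ^+ (i - l) * (1 - m ^+ (2 * l)).

Definition V_ERM (eta : R) (h sigma2 : 'I_d -> R) (j : 'I_d) : R :=
  eta ^+ 2 * h j ^+ 2 * sigma2 j * (1 - Mcoef eta h j ^+ 2)^-1.

Definition V_AvgLA (eta alpha : R) (k : nat) (beta : nat -> R)
    (h sigma2 : 'I_d -> R) (j : 'I_d) : R :=
  alpha ^+ 2 * Ycoef eta k beta h j * (1 - Acoef eta alpha k beta h j ^+ 2)^-1
  * (eta ^+ 2 * h j ^+ 2 * sigma2 j * (1 - Mcoef eta h j ^+ 2)^-1).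

End NQM.

(* Main.v *)
Require Import Defs.
From mathcomp Require Import all_boot all_order all_algebra.
From mathcomp Require Import ring lra.
Import Order.TTheory GRing.Theory Num.Theory.
Local Open Scope ring_scope.

Lemma sq_sum (R : realFieldType) (x : nat -> R) k :
  (\sum_(i<k) x i)^+2 = \sum_(i<k) x i ^+2 + 2 * \sum_(i<k) \sum_(l<i) x i * x l.
Proof.
elim: k => [|k IH]; first by rewrite !big_ord0; ring.
rewrite !big_ord_recr /= -mulr_sumr sqrrD IH.
ring.
Qed.

Theorem mainTheorem3 (R : realFieldType) (d : nat) (eta alpha : R) (k : nat)
    (beta : nat -> R) (h sigma2 : 'I_d -> R)
    (Hh : forall j, 0 < eta * h j /\ eta * h j < 1)
    (Hsig : forall j, 0 <= sigma2 j)
    (Halpha : 0 < alpha /\ alpha <= 1)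
    (Hbeta : forall i, (i < k)%N -> 0 <= beta i)
    (Hsum : \sum_(i < k) beta i = 1)
    (Hbeta0 : beta 0%N < 1) :
  forall j : 'I_d,
    V_AvgLA eta alpha k beta h sigma2 j <= V_ERM eta h sigma2 j.
Proof.
move=> j.
have [he1 he2] := Hh j.
have [ha1 ha2] := Halpha.
rewrite /V_AvgLA /V_ERM /Acoef /Ycoef.
set m := Mcoef eta h j.
have hm0 : 0 < m by rewrite /m /Mcoef; lra.
have hm1 : m < 1 by rewrite /m /Mcoef; lra.
set S := \sum_(i < k) beta i * m ^+ i.
have S0 : 0 <= S.
  by apply: sumr_ge0 => i _; apply: mulr_ge0; [apply: Hbeta | apply: exprn_ge0; lra].
have S1 : S < 1.
  case: k Hbeta Hsum @S S0 => [|k] Hbeta Hsum S S0.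
    by move: Hsum; rewrite big_ord0 => /eqP; rewrite eq_sym oner_eq0.
  rewrite /S big_ord_recl /=.
  move: Hsum; rewrite big_ord_recl /= => Hsum.
  have Hle : \sum_(i < k) beta (bump 0 i) * m ^+ bump 0 i <= m * \sum_(i < k) beta (bump 0 i).
    rewrite mulr_sumr; apply: ler_sum => i _.
    rewrite [X in X <= _]mulrC; apply: ler_wpM2r.
      by apply: Hbeta; rewrite /bump add1n ltnS.
    rewrite /bump add1n exprS -[X in _ <= X]mulr1; apply: ler_wpM2l; first lra.
    by apply: exprn_ile1; lra.
  have b0 : 0 <= beta 0%N by apply: Hbeta.
  rewrite expr0 mulr1.
  nra.
set Y := (X in alpha ^+ 2 * X / _ * _ <= _).
have hb : forall i (l : 'I_i), (i < k)%N -> 0 <= beta i * beta l.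
  move=> i l ik; apply: mulr_ge0; apply: Hbeta => //.
  exact: ltn_trans (ltn_ord l) ik.
have E1 : \sum_(i < k) beta i ^+ 2 * (1 - m ^+ (2 * i))
   = \sum_(i < k) beta i ^+ 2 - \sum_(i < k) (beta i * m ^+ i) ^+ 2.
  rewrite -sumrB; apply: eq_bigr => i _.
  by rewrite exprMn -exprM mulnC; ring.
have E2 : \sum_(i < k) \sum_(l < i) beta i * beta l * m ^+ (i - l) * (1 - m ^+ (2 * l))
   = \sum_(i < k) \sum_(l < i) beta i * beta l * m ^+ (i - l)
     - \sum_(i < k) \sum_(l < i) (beta i * m ^+ i) * (beta l * m ^+ l).
  rewrite -sumrB; apply: eq_bigr => i _.
  rewrite -sumrB; apply: eq_bigr => l _.
  have H : m ^+ i = m ^+ (i - l) * m ^+ l.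
    by rewrite -exprD subnK // ltnW.
  rewrite H mulnC exprM; ring.
have E3 : \sum_(i < k) \sum_(l < i) beta i * beta l * m ^+ (i - l)
   <= \sum_(i < k) \sum_(l < i) beta i * beta l.
  apply: ler_sum => i _; apply: ler_sum => l _.
  rewrite -[X in _ <= X]mulr1; apply: ler_wpM2l; first exact: hb.
  by apply: exprn_ile1; lra.
have HS := sq_sum _ (fun i => beta i * m ^+ i) k.
have H1 := sq_sum _ beta k.
rewrite Hsum -/S in H1 HS.
have HY : Y <= 1 - S ^+ 2.
  rewrite /Y E1 E2; lra.
have hm2 : 0 < 1 - m ^+ 2 by nra.
have E0 : 0 <= eta ^+ 2 * h j ^+ 2 * sigma2 j / (1 - m ^+ 2).
  apply: divr_ge0; last lra.
  by apply: mulr_ge0; [rewrite -exprMn; apply: sqr_ge0 | apply: Hsig].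
have hu : 0 < alpha * (1 - S) by apply: mulr_gt0; lra.
have hu1 : alpha * (1 - S) <= 1 by nra.
have hA : 0 < 1 - (1 - alpha + alpha * S) ^+ 2.
  have -> : 1 - (1 - alpha + alpha * S) ^+ 2 = alpha * (1 - S) * (2 - alpha * (1 - S)) by ring.
  apply: mulr_gt0; lra.
apply: ler_piMl => //.
rewrite ler_pdivrMr // mul1r.
have hd : 0 <= alpha * (1 - S) * (2 - 2 * alpha) by apply: mulr_ge0; lra.
nra.
Qed.
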